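(* Let $c_1,c_2,c_3\in\mathbb{C}$ with $|c_i|>1$, let $r_i=\sqrt{|c_i|^2-1}$, and let $L_i=\{z\in\mathbb{D}:|z-c_i|=r_i\}$, where $\mathbb{D}=\{z\in\mathbb{C}:|z|<1\}$. Assume that $L_1,L_2,L_3$ together with the point $z_0=0$ satisfy the configuration condition in the context. Define $\tau_i\colon S^1\to S^1$ by $\tau_i(z)=\dfrac{r_i^2}{\bar z-\bar c_i}+c_i$ if $|z-c_i|>r_i$ and $\tau_i(z)=z$ otherwise. Then there exists a real constant $C<1$, depending only on $L_1,L_2,L_3$, such that for all $x,y\in S^1$ there exists $i\in\{1,2,3\}$ with $|\tau_i(x)-\tau_i(y)|<C|x-y|$.
   Context: $\mathbb{D}$ is the Poincaré disk model of the hyperbolic plane with boundary $S^1=\{|z|=1\}$; hyperbolic lines not through $0$ are the arcs $\{z\in\mathbb{D}:|z-c|^2=|c|^2-1\}$ with $|c|>1$, and lines through $0$ are diameters. Configuration condition: for all distinct $i,i'\in\{1,2,3\}$, either (a) $L_i\cap L_{i'}=\emptyset$ and $z_0$ lies in the connected component of $\mathbb{D}\setminus(L_i\cup L_{i'})$ whose boundary contains both lines, or (b) $L_i,L_{i'}$ meet at an angle of measure $\pi/m$ for some integer $m\ge2$, and $z_0$ lies in the interior of that angle. *)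

(* Defs.v *)
From HB Require Import structures.
From mathcomp Require Import all_boot all_order all_algebra.
From mathcomp Require Import all_classical all_reals.
From mathcomp Require Import all_analysis.
From mathcomp Require Import complex.
Set Implicit Arguments. Unset Strict Implicit. Unset Printing Implicit Defensive.
Import Order.TTheory GRing.Theory Num.Theory.
Import numFieldTopology.Exports numFieldNormedType.Exports.
Local Open Scope ring_scope.
Local Open Scope classical_set_scope.

Section Hyp.
Variable R : realType.
Local Notation C := R[i].

Definition cmod (z : C) : R := Num.sqrt (complex.Re z ^+ 2 + complex.Im z ^+ 2).

Definition cconj (z : C) : C := (complex.Re z +i* (- complex.Im z))%C.

Definition cdot (z w : C) : R := complex.Re z * complex.Re w + complex.Im z * complex.Im w.

Definition disk : set C := [set z | cmod z < 1].
Definition S1 : set C := [set z | cmod z = 1].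

(* radius r = sqrt(|c|^2 - 1) of the circle orthogonal to S^1 centered at c *)
Definition rad (c : C) : R := Num.sqrt (cmod c ^+ 2 - 1).

Definition hline (c : C) : set C := [set z | cmod z < 1 /\ cmod (z - c) = rad c].

Definition tau (c : C) (z : C) : C :=
  if rad c < cmod (z - c) then (rad c ^+ 2)%:C%C / (cconj z - cconj c) + c else z.

Definition ofR2 (p : R * R) : C := (p.1 +i* p.2)%C.
Definition inR2 (A : set C) : set (R * R) := [set p | A (ofR2 p)].
Definition toR2 (z : C) : R * R := (complex.Re z, complex.Im z).

Definition frontier (A : set (R * R)) : set (R * R) := closure A `\` interior A.

Definition vangle (u v : C) : R := acos (cdot u v / (cmod u * cmod v)).

(* angle at the intersection point p of the lines L_c and L_c' of the sector
   (complementary region near p) containing z0: near p, the side of L_c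
   containing z0 is the half-plane {v | s * ((v - p) . (p - c)) > 0}, where
   s = +1 if z0 is outside the disk |z - c| < r and s = -1 otherwise;
   the intersection of two half-planes with inner normals u, u' has opening
   angle pi - angle(u, u'). *)
Definition side (c z0 : C) : R := if rad c < cmod (z0 - c) then 1 else -1.
Definition sector_angle (c c' z0 p : C) : R :=
  pi - vangle ((side c z0)%:C%C * (p - c)) ((side c' z0)%:C%C * (p - c')).

Definition pair_config (c c' z0 : C) : Prop :=
  (hline c `&` hline c' = set0 /\
     let U := connected_component (inR2 (disk `\` (hline c `|` hline c'))) (toR2 z0) in
     inR2 (hline c) `<=` frontier U /\ inR2 (hline c') `<=` frontier U)
  \/
  (exists p, hline c p /\ hline c' p /\
     exists m : nat, (2 <= m)%N /\ sector_angle c c' z0 p = pi / m%:R).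

Definition config (c : 'I_3 -> C) (z0 : C) : Prop :=
  forall i i' : 'I_3, i != i' -> pair_config (c i) (c i') z0.

End Hyp.

(* Main.v *)
Require Import Defs.
From HB Require Import structures.
From mathcomp Require Import all_boot all_order all_algebra.
From mathcomp Require Import all_classical all_reals.
From mathcomp Require Import all_analysis.
From mathcomp Require Import complex.
From mathcomp Require Import ring lra.
Import Order.TTheory GRing.Theory Num.Theory.
Import numFieldTopology.Exports numFieldNormedType.Exports.
Local Open Scope ring_scope.
Local Open Scope classical_set_scope.

Set Implicit Arguments. Unset Strict Implicit.
Local Notation Re := complex.Re.
Local Notation Im := complex.Im.
Section Dev.
Variable R : realType.


Lemma cfst : continuous (fun p : R * R => p.1).
Proof. move=> p. exact: cvg_fst. Qed.
Lemma csnd : continuous (fun p : R * R => p.2).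
Proof. move=> p. exact: cvg_snd. Qed.
Lemma cg (a b k : R) : continuous (fun p : R * R => (p.1 - a) * (p.1 - a) + (p.2 - b) * (p.2 - b) - k).
Proof.
move=> p.
apply: cvgB; last exact: cvg_cst.
apply: cvgD; apply: cvgM; apply: cvgB; try exact: cvg_cst; try exact: cfst; exact: csnd.
Qed.

Lemma cmod_sq (z : R[i]) : cmod z ^+ 2 = complex.Re z ^+ 2 + complex.Im z ^+ 2.
Proof. by rewrite /cmod sqr_sqrtr // addr_ge0 // sqr_ge0. Qed.

Lemma cmod_ge0 (z : R[i]) : 0 <= cmod z.
Proof. exact: sqrtr_ge0. Qed.

Lemma rad_sq (c : R[i]) : 1 < cmod c -> Defs.rad c ^+ 2 = cmod c ^+ 2 - 1.
Proof.
move=> h; rewrite /Defs.rad sqr_sqrtr // subr_ge0.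
have h0 := cmod_ge0 c. nra.
Qed.

Lemma eq_sqr_ge0 (x y : R) : 0 <= x -> 0 <= y -> x ^+ 2 = y ^+ 2 -> x = y.
Proof. move=> hx hy h. apply/eqP; rewrite -(eqrXn2 (n:=2)) //; exact/eqP. Qed.

Lemma subC_ (z : R[i]) (x y : R) : (x +i* y)%C - z = ((x - complex.Re z) +i* (y - complex.Im z))%C.
Proof. by case: z. Qed.

Lemma lt_sq (x y : R) : 0 <= x -> 0 <= y -> (x < y) = (x ^+ 2 < y ^+ 2).
Proof. move=> hx hy; apply/idP/idP => h; nra. Qed.

Lemma topo (c c' : R[i]) (p : R * R) :
  1 < cmod c' ->
  closure (connected_component (inR2 (disk (R:=R) `\` (hline c `|` hline c'))) (toR2 0)) p ->
  cmod c' ^+ 2 - 1 <= (p.1 - complex.Re c') * (p.1 - complex.Re c') + (p.2 - complex.Im c') * (p.2 - complex.Im c').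
Proof.
move=> hc' hcl.
set a := complex.Re c'; set b := complex.Im c'; set k := cmod c' ^+ 2 - 1.
set G := (fun p : R * R => (p.1 - a) * (p.1 - a) + (p.2 - b) * (p.2 - b) - k).
have Gc : continuous G by exact: cg.
have hk : k = a ^+ 2 + b ^+ 2 - 1 by rewrite /k cmod_sq.

set U := connected_component _ _ in hcl.
have UG : U `<=` [set q | 0 <= G q].
  move=> y [B [B0 BA Bc] By]; rewrite /=.
  rewrite leNgt; apply/negP => Gy.
  have cGB : connected (G @` B).
    apply: connected_continuous_connected => //; exact: continuous_subspaceT.
  have /connected_intervalP Ii := cGB.
  have G0 : 0 < G (toR2 0).
    rewrite /G /= hk. lra.
  have [q Bq Gq] : (G @` B) 0.
    apply: (Ii (G y) (G (toR2 0))); [by exists y | by exists (toR2 0) |].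
    by rewrite (ltW Gy) (ltW G0).
  have [Dq Lq] := BA q Bq.
  apply: Lq; right; split; first exact: Dq.
  have hq : ofR2 q - c' = ((q.1 - a) +i* (q.2 - b))%C by rewrite /ofR2 subC_.
  apply: eq_sqr_ge0; [exact: cmod_ge0 | exact: sqrtr_ge0 |].
  rewrite rad_sq // cmod_sq hq /=.
  move: Gq; rewrite /G -/k => Gq. lra.
have : closure U `<=` [set q | 0 <= G q].
  have cl : closed [set q | 0 <= G q].
    have -> : [set q | 0 <= G q] = G @^-1` [set x | 0 <= x] by [].
    by apply: (continuous_closedP G).1 => //; exact: closed_ge.
  by move=> z hz; rewrite ((closure_id _).1 cl); exact: (closureS UG).
move/(_ p hcl); rewrite /G /=. lra.
Qed.





Lemma ReB_ (x y : R[i]) : Re (x - y) = Re x - Re y.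
Proof. by case: x => a b; case: y => c d. Qed.
Lemma ImB_ (x y : R[i]) : Im (x - y) = Im x - Im y.
Proof. by case: x => a b; case: y => c d. Qed.



Lemma tauE (c x : R[i]) : Defs.rad c < cmod (x - c) ->
  Re (Defs.tau c x) = Re c + Defs.rad c ^+ 2 * (Re x - Re c) / cmod (x - c) ^+ 2 /\
  Im (Defs.tau c x) = Im c + Defs.rad c ^+ 2 * (Im x - Im c) / cmod (x - c) ^+ 2.
Proof.
move=> h; rewrite /Defs.tau h cmod_sq ReB_ ImB_.
case: x {h} => x1 x2; case: c => c1 c2 /=.
set r := Defs.rad _.
have e : (- x2 - - c2) = -(x2 - c2) by ring.
rewrite e sqrrN; split; ring.
Qed.

Lemma core_out (a1 a2 b1 b2 rho A B k m : R) : A = a1 ^+ 2 + a2 ^+ 2 -> B = b1 ^+ 2 + b2 ^+ 2 ->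
  0 < rho -> rho < A -> rho < B -> k * A = rho -> m * B = rho ->
  (k * a1 - m * b1) ^+ 2 + (k * a2 - m * b2) ^+ 2 <= k * ((a1 - b1) ^+ 2 + (a2 - b2) ^+ 2).
Proof.
move=> hA hB hr hrA hrB hk hm.
have k0 : 0 < k by nra.
have m0 : 0 < m by nra.
have m1 : m < 1 by nra.
have e : (k * a1 - m * b1) ^+ 2 + (k * a2 - m * b2) ^+ 2 = k * m * ((a1 - b1) ^+ 2 + (a2 - b2) ^+ 2).
  have e2 : k * m * ((a1 - b1) ^+ 2 + (a2 - b2) ^+ 2) - ((k * a1 - m * b1) ^+ 2 + (k * a2 - m * b2) ^+ 2)
     = (m - k) * (k * A - m * B) by rewrite hA hB; ring.
  rewrite hk hm subrr mulr0 in e2. lra.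
rewrite e.
have S0 : 0 <= (a1 - b1) ^+ 2 + (a2 - b2) ^+ 2 by rewrite addr_ge0 // sqr_ge0.
have kS : 0 <= k * ((a1 - b1) ^+ 2 + (a2 - b2) ^+ 2) by rewrite mulr_ge0 // ltW.
rewrite -mulrA mulrCA. nra.
Qed.

Lemma core_in (a1 a2 b1 b2 rho A B k : R) : A = a1 ^+ 2 + a2 ^+ 2 -> B = b1 ^+ 2 + b2 ^+ 2 ->
  0 < rho -> rho < A -> B <= rho -> k * A = rho ->
  (k * a1 - b1) ^+ 2 + (k * a2 - b2) ^+ 2 <= k * ((a1 - b1) ^+ 2 + (a2 - b2) ^+ 2).
Proof.
move=> hA hB hr hrA hrB hk.
have k0 : 0 < k by nra.
have k1 : k < 1 by nra.
have e2 : k * ((a1 - b1) ^+ 2 + (a2 - b2) ^+ 2) - ((k * a1 - b1) ^+ 2 + (k * a2 - b2) ^+ 2)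
     = (1 - k) * (k * A - B) by rewrite hA hB; ring.
rewrite hk in e2. nra.
Qed.

Lemma tau_bound (c x y : R[i]) : 1 < cmod c -> Defs.rad c < cmod (x - c) ->
  cmod (Defs.tau c x - Defs.tau c y) ^+ 2 <= (cmod c ^+ 2 - 1) / cmod (x - c) ^+ 2 * cmod (x - y) ^+ 2.
Proof.
move=> hc hx.
have r2 := rad_sq hc.
have r0 : 0 <= Defs.rad c by exact: sqrtr_ge0.
set rho := cmod c ^+ 2 - 1.
have hr : 0 < rho.
  have := cmod_ge0 c. rewrite /rho. nra.
set A := cmod (x - c) ^+ 2.
have hA : rho < A.
  rewrite /A /rho -r2 -lt_sq //. exact: cmod_ge0.
have A0 : A != 0 by apply/eqP => h; rewrite h in hA; lra.
set k := rho / A.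
have hk : k * A = rho by rewrite /k mulfVK.
have [ex1 ex2] := tauE hx.
rewrite r2 -/rho -/A in ex1 ex2.
have eA : A = (Re x - Re c) ^+ 2 + (Im x - Im c) ^+ 2 by rewrite /A cmod_sq ReB_ ImB_.
have exy : cmod (x - y) ^+ 2 = ((Re x - Re c) - (Re y - Re c)) ^+ 2 + ((Im x - Im c) - (Im y - Im c)) ^+ 2.
  rewrite cmod_sq ReB_ ImB_. congr (_ ^+ 2 + _ ^+ 2); ring.
rewrite exy cmod_sq ReB_ ImB_ ex1 ex2.
have f1 : forall u v w : R, rho * u / A = k * u.
  by move=> u v w; rewrite /k mulrAC.
case: (boolP (Defs.rad c < cmod (y - c))) => hy.
- have [ey1 ey2] := tauE hy.
  rewrite r2 -/rho in ey1 ey2. rewrite ey1 ey2.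
  set B := cmod (y - c) ^+ 2 in ey1 ey2.
  have hB : rho < B.
    rewrite /B /rho -r2 -lt_sq //. exact: cmod_ge0.
  have B0 : B != 0 by apply/eqP => h; rewrite h in hB; lra.
  set m := rho / B.
  have hm : m * B = rho by rewrite /m mulfVK.
  have f2 : forall u : R, rho * u / B = m * u by move=> u; rewrite /m mulrAC.
  rewrite !(f1 _ 0 0) !f2.
  have -> : forall (c1 u v : R), c1 + u - (c1 + v) = u - v by move=> *; ring.
  have -> : forall (c1 u v : R), c1 + u - (c1 + v) = u - v by move=> *; ring.
  apply: (core_out eA _ hr hA hB hk hm).
  by rewrite /B cmod_sq ReB_ ImB_.
- have ty : Defs.tau c y = y by rewrite /Defs.tau (negbTE hy).
  rewrite ty !(f1 _ 0 0).
  have hB : cmod (y - c) ^+ 2 <= rho.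
    rewrite /rho -r2 lerXn2r // ?nnegrE ?cmod_ge0 //. by rewrite leNgt.
  have -> : forall (c1 u v : R), c1 + u - v = u - (v - c1) by move=> *; ring.
  have -> : forall (c1 u v : R), c1 + u - v = u - (v - c1) by move=> *; ring.
  apply: (core_in eA _ hr hA hB hk).
  by rewrite cmod_sq ReB_ ImB_.
Qed.


Lemma keyr (a b p q r1 r2 d : R) : 0 < r1 -> 0 < r2 -> 0 < d -> 16 * d <= 1 ->
  16 * d <= r1 -> 16 * d <= r2 -> a ^+ 2 + p ^+ 2 = 1 + r1 -> b ^+ 2 + q ^+ 2 = 1 + r2 ->
  0 <= p * q -> a * b + p * q <= 1 -> 1 - d < a -> 1 - d < b -> False.
Proof.
move=> h1 h2 hd hd1 hd2 hd3 ea eb pq0 hab ha hb.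
have a0 : 0 < a by lra.
have b0 : 0 < b by lra.
have ab1 : a * b <= 1 by lra.
have F1a : a * (1 - d) < 1.
  have : a * (1 - d) < a * b by rewrite ltr_pM2l.
  lra.
have F1b : b * (1 - d) < 1.
  have : b * (1 - d) < b * a by rewrite ltr_pM2l.
  rewrite mulrC in ab1. lra.
have sq1 : forall X : R, 0 <= X -> X < 1 -> X * X < 1.
  move=> X X0 X1. have : X * X <= X * 1 by rewrite ler_wpM2l // ltW. lra.
have F2 : forall a, 0 < a -> a * (1 - d) < 1 -> a ^+ 2 <= 1 + 3 * d.
  move=> z z0 hz.
  have t1 : (z * (1 - d)) * (z * (1 - d)) < 1 by apply: sq1 => //; apply: mulr_ge0; lra.
  have t2 : z ^+ 2 * (1 - 2 * d) <= (z * (1 - d)) * (z * (1 - d)).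
    have -> : (z * (1 - d)) * (z * (1 - d)) = z ^+ 2 * (1 - 2 * d) + (z * d) ^+ 2 by ring.
    have := sqr_ge0 (z * d). lra.
  rewrite leNgt; apply/negP => hc.
  have t3 : (1 + 3 * d) * (1 - 2 * d) < z ^+ 2 * (1 - 2 * d) by rewrite ltr_pM2r //; lra.
  have t4 : 1 <= (1 + 3 * d) * (1 - 2 * d).
    have -> : (1 + 3 * d) * (1 - 2 * d) = 1 + d * (1 - 6 * d) by ring.
    have : 0 <= d * (1 - 6 * d) by apply: mulr_ge0; lra.
    lra.
  lra.
have F2a := F2 a a0 F1a.
have F2b := F2 b b0 F1b.
have F3 : forall z, 0 < z -> z ^+ 2 <= 1 + 3 * d -> z <= 1 + 2 * d.
  move=> z z0 hz; rewrite leNgt; apply/negP => hc.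
  have : (1 + 2 * d) * (1 + 2 * d) < z * z by apply: ltr_pM; lra.
  rewrite expr2 in hz. have := sqr_ge0 d. rewrite expr2 => ?. lra.
have F3a := F3 a a0 F2a.
have F3b := F3 b b0 F2b.
have F3' : (a - b) ^+ 2 <= 9 * d ^+ 2.
  have : `|a - b| <= 3 * d by rewrite ler_norml; apply/andP; split; lra.
  move=> h. have : `|a - b| ^+ 2 <= (3 * d) ^+ 2 by rewrite lerXn2r // ?nnegrE ?normr_ge0 //; lra.
  rewrite real_normK ?num_real //. move=> h'. have -> : 9 * d ^+ 2 = (3 * d) ^+ 2 by ring. exact: h'.
have F4 : (p * q) ^+ 2 <= (1 - a * b) ^+ 2.
  rewrite lerXn2r // ?nnegrE //; lra.
have e : (p * q) ^+ 2 = (1 + r1 - a ^+ 2) * (1 + r2 - b ^+ 2).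
  rewrite exprMn; congr (_ * _); lra.
rewrite e in F4.
have F5 : r1 * r2 <= (a - b) ^+ 2 + r1 * (b ^+ 2 - 1) + r2 * (a ^+ 2 - 1).
  have E : (1 + r1 - a ^+ 2) * (1 + r2 - b ^+ 2) - (1 - a * b) ^+ 2
     = r1 * r2 - ((a - b) ^+ 2 + r1 * (b ^+ 2 - 1) + r2 * (a ^+ 2 - 1)) by ring.
  lra.
have G1 : r1 * (b ^+ 2 - 1) <= r1 * (3 * d) by apply: ler_wpM2l; lra.
have G2 : r2 * (a ^+ 2 - 1) <= r2 * (3 * d) by apply: ler_wpM2l; lra.
have G3 : r1 * (3 * d) <= 3 / 16 * (r1 * r2).
  have : r1 * (16 * d) <= r1 * r2 by apply: ler_wpM2l; lra.
  lra.
have G4 : r2 * (3 * d) <= 3 / 16 * (r1 * r2).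
  have : r2 * (16 * d) <= r2 * r1 by apply: ler_wpM2l; lra.
  rewrite (mulrC r2 r1). lra.
have G5 : 9 * d ^+ 2 <= 9 / 256 * (r1 * r2).
  have : (16 * d) * (16 * d) <= r1 * r2 by apply: ler_pM; lra.
  rewrite expr2. lra.
have : 0 < r1 * r2 by exact: mulr_gt0.
lra.
Qed.




Lemma pair_step (x1 x2 c1 c2 e1 e2 r1 r2 d : R) : x1 ^+ 2 + x2 ^+ 2 = 1 ->
  c1 ^+ 2 + c2 ^+ 2 = 1 + r1 -> e1 ^+ 2 + e2 ^+ 2 = 1 + r2 ->
  0 < r1 -> 0 < r2 -> 0 < d -> 16 * d <= 1 -> 16 * d <= r1 -> 16 * d <= r2 ->
  c1 * e1 + c2 * e2 <= 1 ->
  0 <= (x1 * c2 - x2 * c1) * (x1 * e2 - x2 * e1) ->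
  1 - d < x1 * c1 + x2 * c2 -> 1 - d < x1 * e1 + x2 * e2 -> False.
Proof.
move=> hx hc he h1 h2 hd hd1 hd2 hd3 hD hpq ha hb.
apply: (keyr h1 h2 hd hd1 hd2 hd3 _ _ hpq _ ha hb).
- have -> : (x1 * c1 + x2 * c2) ^+ 2 + (x1 * c2 - x2 * c1) ^+ 2 = (x1 ^+ 2 + x2 ^+ 2) * (c1 ^+ 2 + c2 ^+ 2) by ring.
  by rewrite hx hc mul1r.
- have -> : (x1 * e1 + x2 * e2) ^+ 2 + (x1 * e2 - x2 * e1) ^+ 2 = (x1 ^+ 2 + x2 ^+ 2) * (e1 ^+ 2 + e2 ^+ 2) by ring.
  by rewrite hx he mul1r.
- have -> : (x1 * c1 + x2 * c2) * (x1 * e1 + x2 * e2) + (x1 * c2 - x2 * c1) * (x1 * e2 - x2 * e1)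
    = (x1 ^+ 2 + x2 ^+ 2) * (c1 * e1 + c2 * e2) by ring.
  by rewrite hx mul1r.
Qed.

Lemma sign3 (p0 p1 p2 : R) : 0 <= p0 * p1 \/ 0 <= p0 * p2 \/ 0 <= p1 * p2.
Proof.
case: (lerP 0 (p0 * p1)) => h01; first by left.
case: (lerP 0 (p0 * p2)) => h02; first by right; left.
right; right.
have : 0 < (p0 * p1) * (p0 * p2).
  have h : 0 < (- (p0 * p1)) * (- (p0 * p2)) by apply: mulr_gt0; lra.
  by rewrite mulrNN in h.
have -> : (p0 * p1) * (p0 * p2) = p0 ^+ 2 * (p1 * p2) by ring.
have := sqr_ge0 p0. nra.
Qed.


Lemma mkpt (P N : R) : 0 < N -> 0 < P -> N < P ^+ 2 ->
  exists t, [/\ 0 < t, N * t ^+ 2 < 1 & N * t ^+ 2 - 2 * P * t + 1 = 0].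
Proof.
move=> N0 P0 hPN.
set S := Num.sqrt (P ^+ 2 - N).
have S2 : S ^+ 2 = P ^+ 2 - N by rewrite sqr_sqrtr // subr_ge0 ltW.
have S0 : 0 < S by rewrite sqrtr_gt0 subr_gt0.
have SP : S < P.
  rewrite ltNge; apply/negP => h.
  have : P * P <= S * S by apply: ler_pM; lra.
  rewrite -!expr2. lra.
exists ((P - S) / N).
have NV : N * N^-1 = 1 by rewrite mulfV // gt_eqF.
have et : N * ((P - S) / N) = P - S by rewrite mulrCA NV mulr1.
have t0 : 0 < (P - S) / N by apply: divr_gt0; lra.
have e1 : N * ((P - S) / N) ^+ 2 = (P - S) * ((P - S) / N) by rewrite expr2 mulrA et.
have e2 : (P + S) * ((P - S) / N) = 1.
  rewrite mulrA.
  have -> : (P + S) * (P - S) = N.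
    have -> : (P + S) * (P - S) = P ^+ 2 - S ^+ 2 by ring.
    lra.
  exact: NV.
move: t0 e1 e2 et; set t := (P - S) / N => t0 e1 e2 et.
split => //.
- rewrite e1. have : P * t < 1.
    have : 0 < S * t by rewrite mulr_gt0.
    lra.
  move=> h. have : (P - S) * t = 2 * (P * t) - (P + S) * t by ring.
  lra.
- rewrite e1. have : (P - S) * t - 2 * P * t = - ((P + S) * t) by ring.
  lra.
Qed.




Lemma on_line (c : R[i]) (z1 z2 : R) : 1 < cmod c -> z1 ^+ 2 + z2 ^+ 2 < 1 ->
  (z1 - Re c) ^+ 2 + (z2 - Im c) ^+ 2 = cmod c ^+ 2 - 1 -> hline c (z1 +i* z2)%C.
Proof.
move=> hc h1 h2; split.
- rewrite lt_sq ?cmod_ge0 // cmod_sq /= expr1n. exact: h1.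
- apply: eq_sqr_ge0; [exact: cmod_ge0 | exact: sqrtr_ge0 |].
  by rewrite rad_sq // cmod_sq subC_ /=.
Qed.

Lemma lam_ex (cw W : R) : 0 <= W -> cw <= 0 -> 0 <= cw + W -> (W = 0 -> cw = 0) ->
  exists l, [/\ 0 <= l, l <= 1 & cw + l * W = 0].
Proof.
move=> W0 cw0 cwW hW.
case: (eqVneq W 0) => [W00|Wn0].
  by exists 0; rewrite mul0r addr0 hW //; split => //; lra.
have Wp : 0 < W by rewrite lt_def Wn0.
exists (- cw / W); split.
- by apply: divr_ge0 => //; lra.
- rewrite ler_pdivrMr // mul1r. lra.
- by rewrite mulrVK ?unitfE // subrr.
Qed.

Lemma pair_disj (c c' : R[i]) : 1 < cmod c -> 1 < cmod c' ->
  hline c `&` hline c' = set0 ->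
  (let U := connected_component (inR2 (disk (R:=R) `\` (hline c `|` hline c'))) (toR2 0) in
     inR2 (hline c) `<=` frontier U /\ inR2 (hline c') `<=` frontier U) ->
  cdot c c' <= 1.
Proof.
move=> hc hc' Hd /= [F1 F2].
have HC1 : forall z1 z2, hline c (z1 +i* z2)%C ->
    cmod c' ^+ 2 - 1 <= (z1 - Re c') * (z1 - Re c') + (z2 - Im c') * (z2 - Im c').
  move=> z1 z2 hz; have [hcl _] := F1 (z1, z2) hz.
  exact: (topo hc' hcl).
have HC2 : forall z1 z2, hline c' (z1 +i* z2)%C ->
    cmod c ^+ 2 - 1 <= (z1 - Re c) * (z1 - Re c) + (z2 - Im c) * (z2 - Im c).
  move=> z1 z2 hz; have [hcl _] := F2 (z1, z2) hz.
  rewrite setUC in hcl.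
  exact: (topo hc hcl).
move: hc hc' Hd HC1 HC2 {F1 F2}.
case: c => a1 a2; case: c' => b1 b2 hc hc' Hd HC1 HC2.
rewrite /cdot /=.
have na := cmod_sq (a1 +i* a2)%C; have nb := cmod_sq (b1 +i* b2)%C.
rewrite /= in na nb.
move: hc hc' HC1 HC2 => hc hc' HC1 HC2.
have na1 : 1 < a1 ^+ 2 + a2 ^+ 2 by rewrite -na; have := cmod_ge0 (a1 +i* a2)%C; nra.
have nb1 : 1 < b1 ^+ 2 + b2 ^+ 2 by rewrite -nb; have := cmod_ge0 (b1 +i* b2)%C; nra.
rewrite na in HC2; rewrite nb in HC1.
set D := a1 * b1 + a2 * b2.
set NA := a1 ^+ 2 + a2 ^+ 2 in na na1 HC2.
set NB := b1 ^+ 2 + b2 ^+ 2 in nb nb1 HC1.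
case: (ltrP NA D) => hD1.
  have [t [t0 t1 t2]] : exists t, [/\ 0 < t, NA * t ^+ 2 < 1 & NA * t ^+ 2 - 2 * NA * t + 1 = 0].
    apply: mkpt; try lra. rewrite expr2; nra.
  have hz : hline (a1 +i* a2)%C ((t * a1) +i* (t * a2))%C.
    apply: on_line => //=.
    + have -> : (t * a1) ^+ 2 + (t * a2) ^+ 2 = NA * t ^+ 2 by rewrite /NA; ring.
      exact: t1.
    + rewrite na. have -> : (t * a1 - a1) ^+ 2 + (t * a2 - a2) ^+ 2 = NA * t ^+ 2 - 2 * NA * t + NA by rewrite /NA; ring.
      lra.
  have := HC1 _ _ hz.
  have -> : (t * a1 - b1) * (t * a1 - b1) + (t * a2 - b2) * (t * a2 - b2) = NA * t ^+ 2 - 2 * t * D + NB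
    by rewrite /NA /D /NB; ring.
  have : 0 < t * (D - NA) by apply: mulr_gt0; lra.
  lra.
case: (ltrP NB D) => hD2.
  have [t [t0 t1 t2]] : exists t, [/\ 0 < t, NB * t ^+ 2 < 1 & NB * t ^+ 2 - 2 * NB * t + 1 = 0].
    apply: mkpt; try lra. rewrite expr2; nra.
  have hz : hline (b1 +i* b2)%C ((t * b1) +i* (t * b2))%C.
    apply: on_line => //=.
    + have -> : (t * b1) ^+ 2 + (t * b2) ^+ 2 = NB * t ^+ 2 by rewrite /NB; ring.
      exact: t1.
    + rewrite nb. have -> : (t * b1 - b1) ^+ 2 + (t * b2 - b2) ^+ 2 = NB * t ^+ 2 - 2 * NB * t + NB by rewrite /NB; ring.
      lra.
  have := HC2 _ _ hz.
  have -> : (t * b1 - a1) * (t * b1 - a1) + (t * b2 - a2) * (t * b2 - a2) = NB * t ^+ 2 - 2 * t * D + NA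
    by rewrite /NA /D /NB; ring.
  have : 0 < t * (D - NB) by apply: mulr_gt0; lra.
  lra.
set w1 := b1 - a1; set w2 := b2 - a2.
set W := w1 ^+ 2 + w2 ^+ 2.
have ecw : a1 * w1 + a2 * w2 = D - NA by rewrite /w1 /w2 /D /NA; ring.
have ecw' : a1 * w1 + a2 * w2 + W = NB - D by rewrite /W /w1 /w2 /D /NA /NB; ring.
have [l [l0 l1 hl]] : exists l, [/\ 0 <= l, l <= 1 & (a1 * w1 + a2 * w2) + l * W = 0].
  apply: lam_ex.
  - by rewrite /W addr_ge0 // sqr_ge0.
  - lra.
  - lra.
  - move=> W0. have e1 : w1 = 0 by move: W0; rewrite /W; have := sqr_ge0 w1; have := sqr_ge0 w2; move=> *; apply/eqP; rewrite -sqrf_eq0; apply/eqP; lra.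
    have e2 : w2 = 0 by move: W0; rewrite /W; have := sqr_ge0 w1; have := sqr_ge0 w2; move=> *; apply/eqP; rewrite -sqrf_eq0; apply/eqP; lra.
    by rewrite e1 e2 !mulr0 addr0.
have [u1 hu1] : exists u1, u1 = a1 + l * w1 by eexists.
have [u2 hu2] : exists u2, u2 = a2 + l * w2 by eexists.
have [U2 hU2] : exists U2, U2 = u1 ^+ 2 + u2 ^+ 2 by eexists.
have uw : u1 * w1 + u2 * w2 = 0.
  have -> : u1 * w1 + u2 * w2 = (a1 * w1 + a2 * w2) + l * W by rewrite hu1 hu2 /W; ring.
  exact: hl.
have uc : u1 * a1 + u2 * a2 = U2.
  have -> : u1 * a1 + u2 * a2 = U2 - l * (u1 * w1 + u2 * w2) by rewrite hU2 hu1 hu2; ring.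
  by rewrite uw mulr0 subr0.
have uc' : u1 * b1 + u2 * b2 = U2.
  have -> : u1 * b1 + u2 * b2 = (u1 * a1 + u2 * a2) + (u1 * w1 + u2 * w2) by rewrite /w1 /w2; ring.
  by rewrite uc uw addr0.
case: (ltrP 1 U2) => hU.
  have [t [t0 t1 t2]] : exists t, [/\ 0 < t, U2 * t ^+ 2 < 1 & U2 * t ^+ 2 - 2 * U2 * t + 1 = 0].
    apply: mkpt; try lra. rewrite expr2; nra.
  have hz1 : hline (a1 +i* a2)%C ((t * u1) +i* (t * u2))%C.
    apply: on_line => //=.
    + have -> : (t * u1) ^+ 2 + (t * u2) ^+ 2 = U2 * t ^+ 2 by rewrite hU2; ring.
      exact: t1.
    + rewrite na. have -> : (t * u1 - a1) ^+ 2 + (t * u2 - a2) ^+ 2 = U2 * t ^+ 2 - 2 * t * (u1 * a1 + u2 * a2) + NA by rewrite /NA hU2; ring.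
      rewrite uc. lra.
  have hz2 : hline (b1 +i* b2)%C ((t * u1) +i* (t * u2))%C.
    apply: on_line => //=.
    + have -> : (t * u1) ^+ 2 + (t * u2) ^+ 2 = U2 * t ^+ 2 by rewrite hU2; ring.
      exact: t1.
    + rewrite nb. have -> : (t * u1 - b1) ^+ 2 + (t * u2 - b2) ^+ 2 = U2 * t ^+ 2 - 2 * t * (u1 * b1 + u2 * b2) + NB by rewrite /NB hU2; ring.
      rewrite uc'. lra.
  have : (hline (a1 +i* a2)%C `&` hline (b1 +i* b2)%C) ((t * u1) +i* (t * u2))%C by split.
  by rewrite Hd.
have eD : D = U2 + (1 - 2 * l) * (u1 * w1 + u2 * w2) - l * (1 - l) * W
  by rewrite /D hU2 hu1 hu2 /W /w1 /w2; ring.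
rewrite uw mulr0 addr0 in eD.
have : 0 <= l * (1 - l) * W by rewrite !mulr_ge0 // ?subr_ge0 // /W addr_ge0 // sqr_ge0.
lra.
Qed.




Lemma side0 (c : R[i]) : 1 < cmod c -> side c 0 = 1.
Proof.
move=> hc; rewrite /side ifT //.
rewrite lt_sq ?cmod_ge0 ?sqrtr_ge0 // rad_sq // !cmod_sq.
have -> : Re (0 - c) ^+ 2 + Im (0 - c) ^+ 2 = Re c ^+ 2 + Im c ^+ 2 by case: c hc => a b _ /=; ring.
lra.
Qed.

Lemma acos_half (G : R) : -1 <= G <= 1 -> pi / 2 <= acos G -> G <= 0.
Proof.
move=> hG hA.
have e : cos (acos G) = G by apply: acosK; rewrite in_itv /=.
have hpi := acos_lepi hG.
rewrite -e.
have -> : acos G = (acos G - pi / 2) + pi / 2 by ring.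
rewrite cosDpihalf oppr_le0.
apply: sin_ge0_pi. apply/andP; split; first lra.
have : 0 < pi :> R by exact: pi_gt0.
lra.
Qed.

Lemma pair_angle (c c' : R[i]) : 1 < cmod c -> 1 < cmod c' ->
  (exists p, hline c p /\ hline c' p /\ exists m : nat, (2 <= m)%N /\ sector_angle c c' 0 p = pi / m%:R) ->
  cdot c c' <= 1.
Proof.
move=> hc hc' [p [[hp1 hp2] [[hq1 hq2] [m [hm hs]]]]].
move: hs; rewrite /sector_angle !side0 //.
have e1 : forall z : R[i], ((1 : R)%:C)%C * z = z by move=> z; rewrite -[((1:R)%:C)%C]/(1 : R[i]) mul1r.
rewrite !e1 /vangle hp2 hq2 => hs.
set X := cdot (p - c) (p - c').
have r0 : 0 < Defs.rad c.
  rewrite lt_sq ?sqrtr_ge0 // expr0n /= rad_sq //. have := cmod_ge0 c. nra.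
have r0' : 0 < Defs.rad c'.
  rewrite lt_sq ?sqrtr_ge0 // expr0n /= rad_sq //. have := cmod_ge0 c'. nra.
have rr : 0 < Defs.rad c * Defs.rad c' by apply: mulr_gt0.
have hm2 : pi / m%:R <= pi / 2 :> R.
  have m0 : (0 < m)%N by apply: leq_trans hm.
  rewrite ler_pdivrMr ?ltr0n //.
  rewrite mulrAC ler_pdivlMr // ler_pM2l ?pi_gt0 // ler_nat. exact: hm.
have X0 : X <= 0.
  rewrite leNgt; apply/negP => X0.
  have CS : X <= Defs.rad c * Defs.rad c'.
    have : X ^+ 2 <= (Defs.rad c * Defs.rad c') ^+ 2.
      rewrite exprMn -hp2 -hq2 !cmod_sq /X /cdot.
      set u1 := Re (p - c); set u2 := Im (p - c); set v1 := Re (p - c'); set v2 := Im (p - c').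
      have -> : (u1 ^+ 2 + u2 ^+ 2) * (v1 ^+ 2 + v2 ^+ 2) = (u1 * v1 + u2 * v2) ^+ 2 + (u1 * v2 - u2 * v1) ^+ 2 by ring.
      have := sqr_ge0 (u1 * v2 - u2 * v1). lra.
    move=> h. rewrite leNgt; apply/negP => h'.
    have : (Defs.rad c * Defs.rad c') * (Defs.rad c * Defs.rad c') < X * X by apply: ltr_pM; lra.
    rewrite -!expr2. lra.
  have G0 : 0 < X / (Defs.rad c * Defs.rad c') by apply: divr_gt0.
  have G1 : X / (Defs.rad c * Defs.rad c') <= 1 by rewrite ler_pdivrMr // mul1r.
  have : pi / 2 <= acos (X / (Defs.rad c * Defs.rad c')) by lra.
  move/(acos_half _) => h. have : X / (Defs.rad c * Defs.rad c') <= 0 by apply: h; lra.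
  lra.
move: X0; rewrite /X /cdot; clear X.
have : cmod (p - c) ^+ 2 = Defs.rad c ^+ 2 by rewrite hp2.
have : cmod (p - c') ^+ 2 = Defs.rad c' ^+ 2 by rewrite hq2.
rewrite !rad_sq // !cmod_sq /cdot.
case: p {hp1 hp2 hq1 hq2 hs} => p1 p2; case: c hc r0 rr => a1 a2 hc r0 rr; case: c' hc' r0' rr => b1 b2 hc' r0' rr /=.
lra.
Qed.


Definition cr (x c : R[i]) := Re x * Im c - Im x * Re c.

Lemma pstep (x c e : R[i]) (d : R) : Re x ^+ 2 + Im x ^+ 2 = 1 ->
  0 < d -> 16 * d <= 1 -> 16 * d <= cmod c ^+ 2 - 1 -> 16 * d <= cmod e ^+ 2 - 1 ->
  cdot c e <= 1 -> 0 <= cr x c * cr x e -> 1 - d < cdot x c -> 1 - d < cdot x e -> False.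
Proof.
move=> hx hd hd1 hdc hde hce hp ha hb.
have hc0 : 0 < cmod c ^+ 2 - 1 by lra.
have he0 : 0 < cmod e ^+ 2 - 1 by lra.
apply: (pair_step hx _ _ hc0 he0 hd hd1 hdc hde hce hp ha hb).
- by rewrite -cmod_sq; ring.
- by rewrite -cmod_sq; ring.
Qed.

Lemma cover3 (x c0 c1 c2 : R[i]) (d : R) : Re x ^+ 2 + Im x ^+ 2 = 1 ->
  0 < d -> 16 * d <= 1 -> 16 * d <= cmod c0 ^+ 2 - 1 -> 16 * d <= cmod c1 ^+ 2 - 1 ->
  16 * d <= cmod c2 ^+ 2 - 1 ->
  cdot c0 c1 <= 1 -> cdot c0 c2 <= 1 -> cdot c1 c2 <= 1 ->
  [\/ cdot x c0 <= 1 - d, cdot x c1 <= 1 - d | cdot x c2 <= 1 - d].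
Proof.
move=> hx hd hd1 h0 h1 h2 d01 d02 d12.
case: (lerP (cdot x c0) (1 - d)) => a0; first by constructor 1.
case: (lerP (cdot x c1) (1 - d)) => a1; first by constructor 2.
case: (lerP (cdot x c2) (1 - d)) => a2; first by constructor 3.
exfalso.
case: (sign3 (cr x c0) (cr x c1) (cr x c2)) => [h|[h|h]].
- exact: (pstep hx hd hd1 h0 h1 d01 h a0 a1).
- exact: (pstep hx hd hd1 h0 h2 d02 h a0 a2).
- exact: (pstep hx hd hd1 h1 h2 d12 h a1 a2).
Qed.

Lemma pair_le1 (c c' : R[i]) : 1 < cmod c -> 1 < cmod c' -> pair_config c c' 0 -> cdot c c' <= 1.
Proof.
move=> hc hc' [[Hd HF]|Hb].
- exact: (pair_disj hc hc' Hd HF).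
- exact: (pair_angle hc hc' Hb).
Qed.

Lemma cmod_gt0 (z : R[i]) : z != 0 -> 0 < cmod z.
Proof.
move=> hz; rewrite lt_def cmod_ge0 andbT.
apply/eqP => h0.
have : Re z ^+ 2 + Im z ^+ 2 = 0 by rewrite -cmod_sq h0 expr0n.
move: hz; clear h0; case: z => a b /= hz e.
have ea : a = 0 by apply/eqP; rewrite -sqrf_eq0; apply/eqP; have := sqr_ge0 a; have := sqr_ge0 b; lra.
have eb : b = 0 by apply/eqP; rewrite -sqrf_eq0; apply/eqP; have := sqr_ge0 a; have := sqr_ge0 b; lra.
by move: hz; rewrite ea eb eqxx.
Qed.

End Dev.
Unset Implicit Arguments. Set Strict Implicit.
Local Close Scope classical_set_scope.

Theorem mainTheorem6 (R : realType) (c : 'I_3 -> R[i]) :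
  (forall i, 1 < cmod (c i)) ->
  config c 0 ->
  exists K : R, K < 1 /\
    forall x y : R[i], S1 x -> S1 y -> x != y ->
      exists i : 'I_3, cmod (tau (c i) x - tau (c i) y) < K * cmod (x - y).
Proof.
move=> hc Hcfg.
pose i0 : 'I_3 := @Ordinal 3 0 isT.
pose i1 : 'I_3 := @Ordinal 3 1 isT.
pose i2 : 'I_3 := @Ordinal 3 2 isT.
have D01 : cdot (c i0) (c i1) <= 1 by apply: pair_le1 => //; exact: Hcfg.
have D02 : cdot (c i0) (c i2) <= 1 by apply: pair_le1 => //; exact: Hcfg.
have D12 : cdot (c i1) (c i2) <= 1 by apply: pair_le1 => //; exact: Hcfg.
set r := fun i => cmod (c i) ^+ 2 - 1.
have r0 : forall i, 0 < r i.
  move=> i; rewrite /r; have := hc i; have := cmod_ge0 (c i). nra.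
set m := Num.min 1 (Num.min (r i0) (Num.min (r i1) (r i2))).
have m0 : 0 < m by rewrite /m !lt_min ltr01 !r0.
have m1 : m <= 1 by rewrite /m ge_min lexx.
have mr0 : m <= r i0 by rewrite /m !ge_min lexx orbT.
have mr1 : m <= r i1 by rewrite /m !ge_min lexx !orbT.
have mr2 : m <= r i2 by rewrite /m !ge_min lexx !orbT.
set d := m / 16.
have d0 : 0 < d by rewrite /d divr_gt0.
have e16 : 16 * d = m by rewrite /d mulrC mulfVK.
set M := r i0 + r i1 + r i2.
have Mr : forall i, r i <= M.
  move=> i; have := r0 i0; have := r0 i1; have := r0 i2.
  case: i => [[|[|[|n]]] Hn] //= *; rewrite /M.
  - have -> : r (Ordinal Hn) = r i0 by congr r; exact: val_inj.
    lra.
  - have -> : r (Ordinal Hn) = r i1 by congr r; exact: val_inj.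
    lra.
  - have -> : r (Ordinal Hn) = r i2 by congr r; exact: val_inj.
    lra.
have M0 : 0 < M by have := r0 i0; have := r0 i1; have := r0 i2; rewrite /M; lra.
set q := M / (M + 2 * d).
have q0 : 0 < q by rewrite /q divr_gt0 //; lra.
have q1 : q < 1 by rewrite /q ltr_pdivrMr ?mul1r; lra.
exists ((1 + q) / 2); split; first lra.
move=> x y hx hy hxy.
have hx1 : Re x ^+ 2 + Im x ^+ 2 = 1 by rewrite -cmod_sq; move: hx; rewrite /S1 /= => ->; rewrite expr1n.
have [i hi] : exists i, cdot x (c i) <= 1 - d.
  case: (cover3 hx1 d0 _ _ _ _ D01 D02 D12); rewrite ?e16 // => h.
  - by exists i0.
  - by exists i1.
  - by exists i2.
exists i.
set A := cmod (x - c i) ^+ 2.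
have eA : A = r i + 2 * (1 - cdot x (c i)).
  rewrite /A /r /= !cmod_sq ReB_ ImB_ /cdot. lra.
have hA : r i + 2 * d <= A by rewrite eA; lra.
have hrad : Defs.rad (c i) < cmod (x - c i).
  rewrite lt_sq ?cmod_ge0 ?sqrtr_ge0 // rad_sq // -/A -/(r i).
  have := r0 i; lra.
have hb := tau_bound y (hc i) hrad.
rewrite -/A -/(r i) in hb.
have kq : r i / A <= q.
  have A0 : 0 < A by have := r0 i; lra.
  rewrite /q ler_pdivrMr // mulrAC ler_pdivlMr; last lra.
  have := Mr i; have := r0 i. nra.
have hxy0 : 0 < cmod (x - y) by apply: cmod_gt0; rewrite subr_eq0.
set a := cmod (tau (c i) x - tau (c i) y) in hb *.
set b := cmod (x - y) in hb hxy0 *.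
have a0 : 0 <= a by exact: cmod_ge0.
have b2 : 0 < b ^+ 2 by rewrite exprn_gt0.
have hb2 : a ^+ 2 <= q * b ^+ 2.
  apply: (le_trans hb); apply: ler_wpM2r; [exact: ltW | exact: kq].
have hK : q < ((1 + q) / 2) ^+ 2.
  have gen : forall q' : R, q' < 1 -> q' < ((1 + q') / 2) ^+ 2.
    move=> q' hq'.
    have -> : ((1 + q') / 2) ^+ 2 = q' + ((1 - q') / 2) ^+ 2 by field.
    have : 0 < ((1 - q') / 2) ^+ 2 by rewrite exprn_gt0 // divr_gt0 //; lra.
    lra.
  exact: gen.
rewrite ltNge; apply/negP => h.
have Kb0 : 0 <= (1 + q) / 2 * b by apply: mulr_ge0; lra.
have : ((1 + q) / 2 * b) * ((1 + q) / 2 * b) <= a * a by apply: ler_pM.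
rewrite -!expr2 exprMn => h2.
have : q * b ^+ 2 < ((1 + q) / 2) ^+ 2 * b ^+ 2 by rewrite ltr_pM2r.
lra.
Qed.
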